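(* Let $S\subseteq\Sigma^n$ be a double-code and $i\in[n]$. (a) $S$ is complementable if and only if $\backslash_i S$ is a complementable double-code. (b) $S$ is prime if and only if $\backslash_i S$ is a prime double-code.
   Context: Let $\Sigma=\{0,1,2,3\}$, $[n]=\{1,\ldots,n\}$. An $i$-line of $\Sigma^n$ is a set of the four words that agree in all coordinates except the $i$th; a line is an $i$-line for some $i$. A double-code is a set meeting every line in $0$ or $2$ elements; a double-MDS-code is a set meeting every line in exactly $2$ elements; a double-code is complementable if contained in a double-MDS-code, and prime if complementable, nonempty and not partitionable into two or more nonempty double-codes. For $S\subseteq\Sigma^n$ and $i\in[n]$, $\mathcal E_i(S)$ is the union of all $i$-lines that meet $S$, and $\backslash_i S=\mathcal E_i(S)\setminus S$. *)

(* Defs.v *)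
From mathcomp Require Import all_boot.
Set Implicit Arguments. Unset Strict Implicit. Unset Printing Implicit Defensive.

(* Sigma = {0,1,2,3} = 'I_4 ; words of length n = {ffun 'I_n -> 'I_4}.
   Coordinates [n] = {1..n} are represented 0-based by 'I_n. *)
Definition word (n : nat) := {ffun 'I_n -> 'I_4}.

Definition iline n (i : 'I_n) (x : word n) : {set word n} :=
  [set y : word n | [forall j : 'I_n, (j != i) ==> (y j == x j)]].

Definition is_line n (L : {set word n}) : Prop :=
  exists (i : 'I_n) (x : word n), L = iline i x.

Definition double_code n (S : {set word n}) : Prop :=
  forall L : {set word n}, is_line L -> #|L :&: S| = 0 \/ #|L :&: S| = 2.

Definition double_MDS_code n (S : {set word n}) : Prop :=
  forall L : {set word n}, is_line L -> #|L :&: S| = 2.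

Definition complementable n (S : {set word n}) : Prop :=
  double_code S /\ exists M : {set word n}, double_MDS_code M /\ S \subset M.

Definition partitionable n (S : {set word n}) : Prop :=
  exists P : {set {set word n}},
    partition P S /\ 2 <= #|P| /\ (forall T, T \in P -> T != set0 /\ double_code T).

Definition prime_dc n (S : {set word n}) : Prop :=
  complementable S /\ S != set0 /\ ~ partitionable S.

(* E_i(S): union of all i-lines meeting S *)
Definition ext n (i : 'I_n) (S : {set word n}) : {set word n} :=
  [set y : word n | [exists x in S, y \in iline i x]].

(* \_i S = E_i(S) \ S *)
Definition bsl n (i : 'I_n) (S : {set word n}) : {set word n} := ext i S :\: S.

(* Main.v *)
Require Import Defs.
From mathcomp Require Import all_boot zify.
Set Implicit Arguments. Unset Strict Implicit. Unset Printing Implicit Defensive.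

Lemma inlineP n (i : 'I_n) (x y : word n) :
  reflect (forall k, k != i -> y k = x k) (y \in iline i x).
Proof.
rewrite /iline inE; apply: (iffP forallP) => H k.
  by move=> ne; apply/eqP; exact: (implyP (H k)).
by apply/implyP => ne; apply/eqP; apply: H.
Qed.

Lemma iline_refl n (i : 'I_n) x : x \in iline i x.
Proof. by apply/inlineP. Qed.

Lemma iline_sym n (i : 'I_n) x y : y \in iline i x -> x \in iline i y.
Proof. by move/inlineP=> H; apply/inlineP => k /H ->. Qed.

Lemma iline_trans n (i : 'I_n) x y z :
  y \in iline i x -> z \in iline i y -> z \in iline i x.
Proof. by move/inlineP=> H1 /inlineP H2; apply/inlineP => k ne; rewrite H2 // H1. Qed.

Definition upd n (x : word n) (j : 'I_n) (a : 'I_4) : word n :=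
  [ffun k => if k == j then a else x k].

Lemma card_iline n (j : 'I_n) x : #|iline j x| = 4.
Proof.
have -> : iline j x = [set upd x j a | a in 'I_4].
  apply/setP => y; apply/idP/imsetP.
    move/inlineP=> H; exists (y j) => //; apply/ffunP => k; rewrite ffunE.
    by case: eqP => [->|/eqP ne] //; rewrite H.
  by case=> a _ ->; apply/inlineP => k ne; rewrite ffunE (negbTE ne).
rewrite card_imset ?card_ord //.
by move=> a b /(congr1 (fun f : word n => f j)); rewrite !ffunE eqxx.
Qed.

Lemma dc_card n (D : {set word n}) j x :
  double_code D -> #|iline j x :&: D| = 0 \/ #|iline j x :&: D| = 2.
Proof. by move=> dc; apply: dc; exists j, x. Qed.

Lemma dc_card2 n (D : {set word n}) j x :
  double_code D -> x \in D -> #|iline j x :&: D| = 2.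
Proof.
move=> dc xD; case: (dc_card j x dc) => // /eqP; rewrite cards_eq0 => /eqP E.
have : x \in iline j x :&: D by apply/setIP; split => //; apply: iline_refl.
by rewrite E inE.
Qed.

Lemma line_card n (L : {set word n}) : is_line L -> #|L| = 4.
Proof. by case=> j [x ->]; apply: card_iline. Qed.

Lemma extP n (i : 'I_n) (S : {set word n}) y :
  reflect (exists2 x, x \in S & y \in iline i x) (y \in ext i S).
Proof.
rewrite /ext inE; apply: (iffP existsP).
  by case=> x /andP[a b]; exists x.
by case=> x a b; exists x; apply/andP.
Qed.

Lemma ext_line n (i : 'I_n) (S : {set word n}) y z : y \in ext i S -> z \in iline i y -> z \in ext i S.
Proof. by case/extP => x xS yx zy; apply/extP; exists x => //; apply: iline_trans zy. Qed.

Lemma sub_ext n (i : 'I_n) (S : {set word n}) : S \subset ext i S.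
Proof. by apply/subsetP => x xS; apply/extP; exists x => //; apply: iline_refl. Qed.

Lemma keyMS n (S M L : {set word n}) z y :
  double_code S -> double_MDS_code M -> S \subset M -> is_line L ->
  z \in L -> z \in S -> y \in L -> y \in M -> y \in S.
Proof.
move=> dcS mM sSM lL zL zS yL yM.
have h2 : #|L :&: S| = 2.
  case: (dcS L lL) => // /eqP; rewrite cards_eq0 => /eqP E.
  have : z \in L :&: S by apply/setIP.
  by rewrite E inE.
have e : L :&: S = L :&: M.
  apply/eqP; rewrite eqEcard h2 (mM L lL) leqnn andbT.
  by apply: setIS.
have : y \in L :&: M by rewrite inE yL yM.
by rewrite -e => /setIP[].
Qed.

Lemma pick_other n (A : {set word n}) z : #|A| = 2 -> exists2 z', z' \in A & z' != z.
Proof.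
move=> h; have : 0 < #|A :\ z|.
  by move: (cardsD1 z A); rewrite h; case: (z \in A) => /=; lia.
case/card_gt0P => z' /setD1P [ne zA]; by exists z'.
Qed.

Lemma k_ne1 n (S : {set word n}) (i j : 'I_n) x0 :
  double_code S -> j != i -> #|iline j x0 :&: ext i S| != 1.
Proof.
move=> dcS ji; apply/negP => /cards1P [a Ha].
have : a \in iline j x0 :&: ext i S by rewrite Ha set11.
case/setIP => aL /extP [z zS az].
have [z' /setIP [z'z z'S] nez] := pick_other z (dc_card2 j dcS zS).
pose a' := upd a j (z' j).
have a'A : a' \in iline j x0 :&: ext i S.
  apply/setIP; split.
    apply/inlineP => k kj; rewrite ffunE (negbTE kj).
    by move/inlineP: aL; apply.
  apply/extP; exists z' => //; apply/inlineP => k ki; rewrite ffunE.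
  case: eqP => [->//|/eqP kj].
  by move/inlineP: az => ->//; move/inlineP: z'z => ->.
move: a'A; rewrite Ha => /set1P ea.
have e1 : z' j = z j.
  have := congr1 (fun f : word n => f j) ea; rewrite /= ffunE eqxx => ->.
  by move/inlineP: az; apply.
move/eqP: nez; apply; apply/ffunP => k.
case: (k =P j) => [->//|/eqP kj]; by move/inlineP: z'z; apply.
Qed.

Lemma k_ne3 n (S M : {set word n}) (i j : 'I_n) x0 :
  double_code S -> double_MDS_code M -> S \subset M -> j != i ->
  #|iline j x0 :&: ext i S| != 3.
Proof.
move=> dcS mM sSM ji; apply/negP => /eqP h3.
set L := iline j x0 in h3 *; set A := L :&: ext i S in h3 *.
have : #|L :\: A| = 1.
  by rewrite cardsD /A setIA setIid -/A h3 /L card_iline.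
case/eqP/cards1P => y Hy.
have yL : y \in L.
  by have : y \in L :\: A by [rewrite Hy set11]; case/setDP.
have yE : y \notin ext i S.
  have : y \in L :\: A by rewrite Hy set11.
  by case/setDP => _; rewrite /A inE yL.
have uE : forall u, u \in L -> u != y -> u \in ext i S.
  move=> u uL uy; apply/negPn/negP => uE.
  have : u \in L :\: A by apply/setDP; split => //; rewrite /A inE (negbTE uE) andbF.
  by rewrite Hy => /set1P e; move/eqP: uy.
have [w /setIP [wy wM]] : exists2 w, w \in iline i y :&: M & True.
  have : 0 < #|iline i y :&: M| by rewrite (mM _ (ex_intro _ i (ex_intro _ y erefl))).
  by case/card_gt0P => w ?; exists w.
have wj : w j = y j by move/inlineP: wy; apply.
have sub : iline j w :&: M \subset [set w].
  apply/subsetP => v /setIP [vw vM]; apply/set1P.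
  pose u := upd y j (v j).
  have uL : u \in L.
    apply/inlineP => k kj; rewrite ffunE (negbTE kj).
    by move/inlineP: yL; apply.
  case: (u =P y) => [ey|/eqP ney].
    have vj : v j = y j by have := congr1 (fun f : word n => f j) ey; rewrite /= ffunE eqxx.
    apply/ffunP => k; case: (k =P j) => [->|/eqP kj]; first by rewrite vj wj.
    by move/inlineP: vw; apply.
  have vu : v \in iline i u.
    apply/inlineP => k ki; rewrite ffunE; case: eqP => [->//|/eqP kj].
    move/inlineP: vw => -> //; move/inlineP: wy => -> //.
  have vE : v \in ext i S by apply: ext_line vu; apply: uE.
  have vS : v \in S.
    case/extP: vE => x xS vx.
    apply: (keyMS dcS mM sSM (ex_intro _ i (ex_intro _ x erefl)) (iline_refl i x) xS vx vM).
  have wS : w \in S.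
    apply: (keyMS dcS mM sSM (ex_intro _ j (ex_intro _ v erefl)) (iline_refl j v) vS _ wM).
    exact: iline_sym.
  by case/negP: yE; apply/extP; exists w => //; apply: iline_sym.
have := subset_leq_card sub; rewrite cards1 (mM _ (ex_intro _ j (ex_intro _ w erefl))).
by [].
Qed.

Lemma bsl_card n (S : {set word n}) (i : 'I_n) (L : {set word n}) :
  #|L :&: bsl i S| = #|L :&: ext i S| - #|L :&: S|.
Proof.
have -> : L :&: bsl i S = (L :&: ext i S) :\: (L :&: S).
  by apply/setP => y; rewrite /bsl !inE; case: (y \in L); case: (y \in S); case: (y \in ext i S).
rewrite cardsD; congr (_ - _).
have -> : (L :&: ext i S) :&: (L :&: S) = L :&: S; last by [].
apply/setP => y; rewrite !in_setI; case yS: (y \in S); case: (y \in L); rewrite /= ?andbT ?andbF //.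
exact: (subsetP (sub_ext i S) y yS).
Qed.

Lemma k4 n (S M : {set word n}) (i j : 'I_n) x0 :
  double_code S -> double_MDS_code M -> S \subset M ->
  #|iline j x0 :&: ext i S| = 4 -> #|iline j x0 :&: S| = 2.
Proof.
move=> dcS mM sSM h4.
have eA : iline j x0 :&: ext i S = iline j x0.
  apply/eqP; rewrite eqEcard subsetIl h4 card_iline //.
have : iline j x0 :&: M \subset iline j x0 :&: S.
  apply/subsetP => y /setIP [yL yM]; apply/setIP; split => //.
  have : y \in ext i S by rewrite -eA in yL; case/setIP: yL.
  case/extP => x xS yx.
  exact: (keyMS dcS mM sSM (ex_intro _ i (ex_intro _ x erefl)) (iline_refl i x) xS yx yM).
move/subset_leq_card; rewrite (mM _ (ex_intro _ j (ex_intro _ x0 erefl))).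
case: (dc_card j x0 dcS) => -> //.
Qed.

Lemma bsl_dc n (S M : {set word n}) (i : 'I_n) :
  double_code S -> double_MDS_code M -> S \subset M -> double_code (bsl i S).
Proof.
move=> dcS mM sSM L [j [x0 ->]].
rewrite bsl_card.
have sk : #|iline j x0 :&: S| <= #|iline j x0 :&: ext i S|.
  by apply: subset_leq_card; apply: setIS; apply: sub_ext.
have k4' : #|iline j x0 :&: ext i S| <= 4.
  by apply: leq_trans (subset_leq_card (subsetIl _ _)) _; rewrite card_iline.
have s02 := dc_card j x0 dcS.
have h4 := @k4 n S M i j x0 dcS mM sSM.
case: (eqVneq j i) => [ji|ji].
  subst j.
  case: (set_0Vmem (iline i x0 :&: S)) => [e0|[z /setIP [zL zS]]].
    have : iline i x0 :&: ext i S = set0.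
      apply/setP => y; rewrite in_set0; apply/negP => /setIP [yL /extP [x xS yx]].
      have : x \in iline i x0 :&: S.
        by apply/setIP; split => //; apply: iline_trans yL (iline_sym yx).
      by rewrite e0 in_set0.
    by move=> ->; rewrite e0 !cards0; left.
  have : iline i x0 :&: ext i S = iline i x0.
    apply/setIidPl/subsetP => y yL; apply/extP; exists z => //.
    by apply: iline_trans (iline_sym zL) yL.
  move=> e; rewrite e card_iline; right.
  have : 0 < #|iline i x0 :&: S| by apply/card_gt0P; exists z; apply/setIP.
  case: s02 => ->; lia.
have n1 := k_ne1 x0 dcS ji.
have n3 := k_ne3 x0 dcS mM sSM ji.
move: n1 n3 => /eqP n1 /eqP n3.
case: (eqVneq #|iline j x0 :&: ext i S| 4) => [e4|ne4].
  by rewrite e4 (h4 e4); right.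
move/eqP: ne4 => ne4.
case: s02 => e; rewrite e; rewrite e in sk; lia.
Qed.

Lemma mds_compl n (M : {set word n}) : double_MDS_code M -> double_MDS_code (~: M).
Proof.
move=> mM L lL; have := cardsD L M; rewrite setDE (mM L lL) (line_card lL) => ->.
by [].
Qed.

Lemma mds_dc n (M : {set word n}) : double_MDS_code M -> double_code M.
Proof. by move=> mM L lL; right; apply: mM. Qed.

Lemma line_bsl n (S : {set word n}) (i : 'I_n) x :
  double_code S -> x \in S -> iline i x :&: bsl i S = iline i x :\: S.
Proof.
move=> dcS xS; apply/setP => y; rewrite in_setI in_setD /bsl in_setD.
case yL: (y \in iline i x); rewrite ?andbF ?andbT //=.
have -> : y \in ext i S by apply/extP; exists x.
by rewrite andbT.
Qed.

Lemma line_bsl_card n (S : {set word n}) (i : 'I_n) x :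
  double_code S -> x \in S -> #|iline i x :&: bsl i S| = 2.
Proof.
move=> dcS xS; rewrite line_bsl // cardsD card_iline (dc_card2 i dcS xS) //.
Qed.

Lemma partA n (S : {set word n}) (i : 'I_n) :
  double_code S ->
  (complementable S <-> (double_code (bsl i S) /\ complementable (bsl i S))).
Proof.
move=> dcS; split.
  case=> _ [M [mM sSM]].
  have db := bsl_dc i dcS mM sSM.
  split => //; split => //; exists (~: M); split; first exact: mds_compl.
  apply/subsetP => y; rewrite /bsl in_setD in_setC => /andP [yS yE].
  apply/negP => yM; case/negP: yS.
  case/extP: yE => x xS yx.
  exact: (keyMS dcS mM sSM (ex_intro _ i (ex_intro _ x erefl)) (iline_refl i x) xS yx yM).
case=> db [_ [M [mM sbM]]].
split => //; exists (~: M); split; first exact: mds_compl.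
apply/subsetP => y yS; rewrite in_setC; apply/negP => yM.
have e : iline i y :&: bsl i S = iline i y :&: M.
  apply/eqP; rewrite eqEcard (line_bsl_card i dcS yS)
    (mM _ (ex_intro _ i (ex_intro _ y erefl))) leqnn andbT.
  by apply: setIS.
have : y \in iline i y :&: M by apply/setIP; split => //; apply: iline_refl.
by rewrite -e line_bsl // in_setD yS.
Qed.

Lemma bsl_invol n (S : {set word n}) (i : 'I_n) :
  double_code S -> bsl i (bsl i S) = S.
Proof.
move=> dcS; apply/setP => y; rewrite /bsl in_setD.
case yS: (y \in S).
  rewrite in_setD yS /=.
  have : 0 < #|iline i y :&: bsl i S| by rewrite line_bsl_card.
  case/card_gt0P => z /setIP [zy zb]; apply/extP; exists z => //.
  exact: iline_sym.
apply/negP => /andP [nb /extP [z zb yz]].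
move: zb; rewrite /bsl in_setD => /andP [_ /extP [x xS zx]].
case/negP: nb; rewrite /bsl in_setD yS /=; apply/extP; exists x => //.
exact: iline_trans zx yz.
Qed.

Lemma bsl0 n (i : 'I_n) : bsl i (set0 : {set word n}) = set0.
Proof.
apply/setP => y; rewrite in_set0 /bsl in_setD; apply/negP => /andP [_ /extP [x]].
by rewrite in_set0.
Qed.

Lemma two_parts n (X T T' : {set word n}) (i : 'I_n) x x' :
  double_code X -> T \subset X -> T' \subset X -> double_code T -> double_code T' ->
  [disjoint T & T'] -> x \in T -> x' \in T' -> x' \in iline i x -> False.
Proof.
move=> dX sT sT' dT dT' dis xT x'T' x'x.
have h1 := dc_card2 i dT xT.
have e : iline i x' = iline i x.
  apply/setP => y; apply/idP/idP => H.
    exact: iline_trans x'x H.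
  exact: iline_trans (iline_sym x'x) H.
have h2 := dc_card2 i dT' x'T'; rewrite e in h2.
have d0 : (iline i x :&: T) :&: (iline i x :&: T') = set0.
  apply/setP => y; rewrite in_set0 !in_setI.
  by case yT: (y \in T); case yT': (y \in T'); rewrite ?andbF //=; move: (disjointFr dis yT); rewrite yT'.
have := cardsUI (iline i x :&: T) (iline i x :&: T'); rewrite d0 cards0 h1 h2 addn0 => hU.
have : (iline i x :&: T) :|: (iline i x :&: T') \subset iline i x :&: X.
  by rewrite -setIUr; apply: setIS; rewrite subUset sT sT'.
move/subset_leq_card; rewrite hU; case: (dc_card i x dX) => ->; by [].
Qed.

Lemma part_bsl n (X : {set word n}) (i : 'I_n) :
  complementable X -> partitionable X -> partitionable (bsl i X).
Proof.
case=> dX [M [mM sXM]] [P [/and3P [/eqP cP tP n0P] [c2 hP]]].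
have sub : forall T, T \in P -> T \subset X.
  by move=> T TP; rewrite -cP; apply: bigcup_sup.
have dcT : forall T, T \in P -> double_code T by move=> T /hP [].
have bdc : forall T, T \in P -> double_code (bsl i T).
  move=> T TP; apply: (bsl_dc i (dcT T TP) mM); exact: subset_trans (sub T TP) sXM.
have inj : {in P &, injective (bsl i)}.
  move=> T T' TP T'P e.
  by rewrite -(bsl_invol i (dcT T TP)) e bsl_invol //; apply: dcT.
have disP : forall T T', T \in P -> T' \in P -> T != T' -> [disjoint T & T'].
  by move=> T T' TP T'P; move/trivIsetP: tP; apply.
exists (bsl i @: P); split; last split.
- apply/and3P; split.
  + apply/eqP; rewrite cover_imset; apply/setP => y; apply/bigcupP/idP.
      case=> T TP; rewrite /bsl !in_setD => /andP [yT /extP [x xT yx]].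
      apply/andP; split; last by apply/extP; exists x => //; apply: (subsetP (sub T TP)).
      apply/negP => yX; move: yX; rewrite -cP => /bigcupP [T' T'P yT'].
      case: (eqVneq T T') => [eT|neT]; first by subst T'; rewrite yT' in yT.
      exact: (two_parts dX (sub T TP) (sub T' T'P) (dcT T TP) (dcT T' T'P) (disP _ _ TP T'P neT) xT yT' yx).
    rewrite /bsl in_setD => /andP [yX /extP [x xX yx]].
    move: (xX); rewrite -cP => /bigcupP [T TP xT]; exists T => //.
    rewrite in_setD; apply/andP; split; last by apply/extP; exists x.
    by apply/negP => yT; case/negP: yX; apply: (subsetP (sub T TP)).
  + apply/trivIsetP => A B /imsetP [T TP ->] /imsetP [T' T'P ->] ne.
    have neT : T != T' by apply/negP => /eqP e; rewrite e eqxx in ne.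
    rewrite -setI_eq0; apply/eqP/setP => y; rewrite in_set0; apply/negP => /setIP [].
    rewrite /bsl !in_setD => /andP [_ /extP [x xT yx]] /andP [_ /extP [x' x'T yx']].
    apply: (two_parts dX (sub T TP) (sub T' T'P) (dcT T TP) (dcT T' T'P) (disP _ _ TP T'P neT) xT x'T).
    exact: iline_trans yx (iline_sym yx').
  + apply/imsetP => [[T TP e]].
    have [Tn _] := hP T TP; case/negP: Tn.
    by rewrite -(bsl_invol i (dcT T TP)) -e bsl0.
- by rewrite card_in_imset.
- move=> A /imsetP [T TP ->]; split; last exact: bdc.
  have [Tn _] := hP T TP; apply/negP => /eqP e; case/negP: Tn.
  by rewrite -(bsl_invol i (dcT T TP)) e bsl0.
Qed.

Theorem proposition6 (n : nat) (S : {set word n}) (i : 'I_n) :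
  double_code S ->
  (complementable S <-> (double_code (bsl i S) /\ complementable (bsl i S))) /\
  (prime_dc S <-> (double_code (bsl i S) /\ prime_dc (bsl i S))).
Proof.
move=> dcS; have hA := partA i dcS; split => //.
have ne : (S != set0) = (bsl i S != set0).
  apply/idP/idP; apply: contra => /eqP e.
    by rewrite -(bsl_invol i dcS) e bsl0.
  by rewrite e bsl0.
split.
  case=> cS [nS np].
  have [db cb] := (proj1 hA) cS.
  split => //; split => //; split; first by rewrite -ne.
  move=> pb; apply: np; rewrite -(bsl_invol i dcS); exact: part_bsl.
case=> db [cb [nb np]].
have cS := (proj2 hA) (conj db cb).
split => //; split; first by rewrite ne.
by move=> pS; apply: np; apply: part_bsl.
Qed.
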